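(* Let $(X_t)_{t\geq0}$ be the cellular automaton defined below, with initial law such that the columns $(X_0(i,\cdot))_{i\in\mathbb N}$ are i.i.d. with common law $\mu$, a probability law on $\{0,1\}^{\mathbb N}$. Then for each $n\in\mathbb N$, the columns $(X_{2n}(i,\cdot))_{i\in\mathbb N}$ are i.i.d. with common law ${\cal F}^n(\mu)$. The same holds with $(X_t)$ replaced by $(\widehat X_t)$ and ${\cal F}$ replaced by $\widehat{\cal F}$.
   Context: Here $\mathbb N=\{0,1,2,\dots\}$, and $X_t(i,\cdot):=(X_t(i,j))_{j\in\mathbb N}$. **Cellular automata.** Given a random $X_0\in\{0,1\}^{\mathbb N^2}$, for $t>0$ and $(i,j)\in\mathbb N^2$ set: - $X_t(i,j)=X_{t-1}(2i,j)\wedge X_{t-1}(2i+1,j)$ if $t$ is even; - $X_t(i,j)=X_{t-1}(i,j)\vee X_{t-1}(i,j+1)$ if $t$ is odd. $\widehat X_t$ is defined likewise from $\widehat X_0$ (with the same initial column assumption) but with the two rules interchanged: the $\wedge$-rule at odd $t$ and the $\vee$-rule at even $t$. **Column maps.** Let $S=\{0,1\}^{\mathbb N}$ and ${\cal M}$ the set of probability laws on $S$. Define $\Phi_{\rm A}(y,z)(k)=y(k)\wedge z(k)$ and $\Phi_{\rm b}(y)(k)=y(k)\vee y(k+1)$. For $\mu\in{\cal M}$, ${\cal F}_{\rm A}(\mu)$ is the law of $\Phi_{\rm A}(Y,Z)$ and ${\cal F}_{\rm b}(\mu)$ is the law of $\Phi_{\rm b}(Y)$, where $Y,Z$ are independent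 with law $\mu$. Set ${\cal F}:={\cal F}_{\rm A}\circ{\cal F}_{\rm b}$ and $\widehat{\cal F}:={\cal F}_{\rm b}\circ{\cal F}_{\rm A}$; ${\cal F}^n$ is the $n$-th iterate. *)

(* Defs.v *)
From HB Require Import structures.
From mathcomp Require Import all_boot all_order all_algebra.
From mathcomp Require Import finmap.
From mathcomp Require Import all_classical all_reals all_analysis.
Set Implicit Arguments. Unset Strict Implicit. Unset Printing Implicit Defensive.
Import Order.TTheory GRing.Theory Num.Theory.
Local Open Scope classical_set_scope.
Local Open Scope ring_scope.

Definition coord_sets : set (set (nat -> bool)) :=
  [set A | exists (k : nat) (B : set bool), A = (fun y : nat -> bool => y k) @^-1` B].

Definition S : measurableType _ := g_sigma_algebraType coord_sets.

Lemma bool_measurable_fun d (T : measurableType d) (g : T -> bool) :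
  measurable [set t | g t] -> measurable_fun setT g.
Proof.
move=> mg _ B _; rewrite setTI.
have -> : g @^-1` B = ((if pselect (B true) then [set t | g t] else set0) `|`
                       (if pselect (B false) then ~` [set t | g t] else set0)).
  apply/seteqP; split => t; rewrite /preimage /setU /setC /=;
    destruct (pselect (B true)) as [Ht|Ht]; destruct (pselect (B false)) as [Hf|Hf];
    case E: (g t); rewrite /= ?E; intuition (try discriminate); (try by left); (try by right); exfalso; auto.
destruct (pselect (B true)); destruct (pselect (B false)); simpl;
  have mC := measurableC mg; first [exact: measurableU _ _ mg mC | exact: measurableU _ _ mg measurable0 | exact: measurableU _ _ measurable0 mC | exact: measurableU _ _ measurable0 measurable0].
Qed.

Lemma measurable_coord (k : nat) : measurable_fun setT (fun y : S => y k).
Proof.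
move=> _ B _; rewrite setTI; apply: sub_sigma_algebra; by exists k, B.
Qed.

Lemma measurable_into_S d (T : measurableType d) (f : T -> S) :
  (forall k, measurable_fun setT (fun t => f t k)) -> measurable_fun setT f.
Proof.
move=> hf; apply: (@measurability _ _ _ _ setT f coord_sets) => //.
move=> _ [_ [k [B ->]] <-]; rewrite setTI -comp_preimage.
by have := hf k measurableT B I; rewrite setTI.
Qed.

Definition PhiA (p : S * S) : S := fun k => p.1 k && p.2 k.
Definition Phib (y : S) : S := fun k => y k || y k.+1.

Lemma measurable_PhiA : measurable_fun setT PhiA.
Proof.
apply: measurable_into_S => k; apply: bool_measurable_fun.
rewrite /PhiA /=.
have -> : [set t : S * S | t.1 k && t.2 k] =
  ((fun p : S * S => p.1 k) @^-1` [set true]) `&` ((fun p : S * S => p.2 k) @^-1` [set true]).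
  by apply/seteqP; split => t /=; [move/andP=> [-> ->]|move=> [-> ->]].
have h1 : measurable_fun setT (fun p : S * S => p.1 k) :=
  measurableT_comp (measurable_coord k) measurable_fst.
have h2 : measurable_fun setT (fun p : S * S => p.2 k) :=
  measurableT_comp (measurable_coord k) measurable_snd.
apply: measurableI.
- by rewrite -[X in measurable X]setTI; apply: h1.
- by rewrite -[X in measurable X]setTI; apply: h2.
Qed.

Lemma measurable_Phib : measurable_fun setT Phib.
Proof.
apply: measurable_into_S => k; apply: bool_measurable_fun.
have -> : [set t : S | Phib t k] =
  ((fun y : S => y k) @^-1` [set true]) `|` ((fun y : S => y k.+1) @^-1` [set true]).
  by apply/seteqP; split => t /=; [move=> /orP [a|a]; [left|right] | move=> [a|a]; apply/orP; [left|right]].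
apply: measurableU.
- by rewrite -[X in measurable X]setTI; apply: measurable_coord.
- by rewrite -[X in measurable X]setTI; apply: measurable_coord.
Qed.

HB.instance Definition _ := isMeasurableFun.Build _ _ _ _ PhiA measurable_PhiA.
HB.instance Definition _ := isMeasurableFun.Build _ _ _ _ Phib measurable_Phib.

Section laws.
Variable R : realType.
Local Open Scope ereal_scope.

Definition FA (mu : probability S R) : probability S R :=
  distribution (mu \x mu) PhiA.
Definition Fb (mu : probability S R) : probability S R :=
  distribution mu Phib.

Definition F (mu : probability S R) : probability S R := FA (Fb mu).
Definition Fhat (mu : probability S R) : probability S R := Fb (FA mu).
End laws.

(* X i j = X(i,j); the column X(i,.) is X i : S.                            *)
Definition Grid := nat -> nat -> bool.

Definition and_rule (X : Grid) : Grid := fun i j => X (2 * i)%N j && X (2 * i + 1)%N j.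
Definition or_rule (X : Grid) : Grid := fun i j => X i j || X i j.+1.

Fixpoint CA (X0 : Grid) (t : nat) : Grid :=
  match t with
  | 0 => X0
  | t'.+1 => if odd t'.+1 then or_rule (CA X0 t') else and_rule (CA X0 t')
  end.

Fixpoint CAhat (X0 : Grid) (t : nat) : Grid :=
  match t with
  | 0 => X0
  | t'.+1 => if odd t'.+1 then and_rule (CAhat X0 t') else or_rule (CAhat X0 t')
  end.

Section iid.
Local Open Scope ereal_scope.
Context d (Omega : measurableType d) (R : realType) (P : probability Omega R).

Definition random_columns (Y : nat -> Omega -> S) : Prop :=
  forall i, measurable_fun setT (Y i).

Definition mutually_independent (Y : nat -> Omega -> S) : Prop :=
  forall (I : {fset nat}) (A : nat -> set S),
    (forall i, i \in I -> measurable (A i)) ->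
    P (\bigcap_(i in [set` I]) (Y i @^-1` A i)) = \prod_(i <- I) P (Y i @^-1` A i).

Definition identically_distributed (Y : nat -> Omega -> S) (mu : probability S R) : Prop :=
  forall i (A : set S), measurable A -> P (Y i @^-1` A) = mu A.

Definition iid_with_law (Y : nat -> Omega -> S) (mu : probability S R) : Prop :=
  [/\ random_columns Y, mutually_independent Y & identically_distributed Y mu].
End iid.

(* Main.v *)
Require Import Defs.
From HB Require Import structures.
From mathcomp Require Import all_boot all_order all_algebra.
From mathcomp Require Import finmap.
From mathcomp Require Import all_classical all_reals all_analysis.

Import Order.TTheory GRing.Theory Num.Theory.

Section Key.
Local Open Scope classical_set_scope.
Local Open Scope ereal_scope.
Context d (Omega : measurableType d) (R : realType) (P : probability Omega R).

Lemma indep_seq (Y : nat -> Omega -> S) : mutually_independent P Y ->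
  forall (s : seq nat) (A : nat -> set S), uniq s ->
  (forall i, i \in s -> measurable (A i)) ->
  P (\bigcap_(i in [set` s]) (Y i @^-1` A i)) = \prod_(i <- s) P (Y i @^-1` A i).
Proof.
move=> hY s A us mA.
have := hY (seq_fset tt s) A.
have hs : [set` seq_fset tt s] = [set` s].
  apply/seteqP; split => x.
  by change (x \in seq_fset tt s -> x \in s); rewrite seq_fsetE.
  by change (x \in s -> x \in seq_fset tt s); rewrite seq_fsetE.
rewrite hs => -> ; last by move=> i; rewrite seq_fsetE; apply: mA.
have hp : perm_eq (seq_fset tt s) s.
  by have := seq_fset_perm tt s; rewrite (undup_id us).
exact: (perm_big _ hp).
Qed.


Lemma half2 i : ((2 * i)./2 = i)%N.
Proof. by rewrite mul2n doubleK. Qed.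
Lemma half21 i : ((2 * i + 1)./2 = i)%N.
Proof. by rewrite addnC mul2n (half_bit_double i true). Qed.
Lemma odd2 i : odd (2 * i)%N = false.
Proof. by rewrite mul2n odd_double. Qed.
Lemma odd21 i : odd (2 * i + 1)%N.
Proof. by rewrite addn1 /= odd2. Qed.

Variables (Y : nat -> Omega -> S) (nu : probability S R).
Hypothesis hY : iid_with_law P Y nu.

Definition pr i (w : Omega) : S * S := (Y (2 * i)%N w, Y (2 * i + 1)%N w).

Lemma mpr i : measurable_fun setT (pr i).
Proof. by case: hY => h _ _; apply: measurable_fun_pair. Qed.

Lemma rect_case (I : {fset nat}) (A B : nat -> set S) :
  (forall i, i \in I -> measurable (A i) /\ measurable (B i)) ->
  P (\bigcap_(i in [set` I]) (pr i @^-1` (A i `*` B i))) =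
  \prod_(i <- I) (nu (A i) * nu (B i)).
Proof.
case: hY => hm hi hd mAB.
pose s := [seq (2 * i)%N | i <- I] ++ [seq (2 * i + 1)%N | i <- I].
pose D j := if odd j then B j./2 else A j./2.
have us : uniq s.
  rewrite cat_uniq; apply/and3P; split.
  - rewrite map_inj_uniq; first exact: fset_uniq.
    by move=> x y e; apply/eqP; rewrite -(eqn_pmul2l (isT : (0 < 2)%N)) e.
  - apply/hasPn => j /mapP [i _ ->]; apply/negP => /mapP [i' _ e].
    by move: (odd21 i); rewrite e odd2.
  - rewrite map_inj_uniq; first exact: fset_uniq.
    by move=> x y e; apply/eqP; rewrite -(eqn_pmul2l (isT : (0 < 2)%N)) -(eqn_add2r 1) e.
have mD : forall j, j \in s -> measurable (D j).
  move=> j; rewrite mem_cat => /orP [] /mapP [i iI ->]; rewrite /D.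
  - by rewrite odd2 half2; case: (mAB i iI).
  - by rewrite odd21 half21; case: (mAB i iI).
have eset : \bigcap_(i in [set` I]) (pr i @^-1` (A i `*` B i)) =
            \bigcap_(j in [set` s]) (Y j @^-1` D j).
  apply/seteqP; split => w H.
  - move=> j /=; rewrite mem_cat => /orP [] /mapP [i iI ->]; rewrite /D.
    + by rewrite odd2 half2; case: (H i iI).
    + by rewrite odd21 half21; case: (H i iI).
  - move=> i /= iI; split => /=.
    + have := H (2 * i)%N; rewrite /D odd2 half2; apply; change ((2 * i)%N \in s).
      by rewrite mem_cat (map_f (fun i => (2 * i)%N) iI).
    + have := H (2 * i + 1)%N; rewrite /D odd21 half21; apply; change ((2 * i + 1)%N \in s).
      by rewrite mem_cat (map_f (fun i => (2 * i + 1)%N) iI) orbT.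
rewrite eset (@indep_seq Y hi s D us mD).
rewrite big_cat !big_map big_split.
congr (_ * _); apply: eq_big_seq => i iI; rewrite /D.
- by rewrite odd2 half2; apply: hd; case: (mAB i iI).
- by rewrite odd21 half21; apply: hd; case: (mAB i iI).
Qed.

Lemma split_cap (I : {fset nat}) k (F : nat -> set Omega) : k \in I ->
  \bigcap_(i in [set` I]) F i = F k `&` \bigcap_(i in [set` (I `\ k)%fset]) F i.
Proof.
move=> kI; apply/seteqP; split => w H.
- split; first exact: H k kI.
  move=> i Hi; have : i \in (I `\ k)%fset := Hi.
  by rewrite in_fsetD1 => /andP [_ iI]; exact: H i iI.
- case: H => Hk Hr i iI; have [->|ne] := eqVneq i k; first exact: Hk.
  apply: Hr; change (i \in (I `\ k)%fset); by rewrite in_fsetD1 ne iI.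
Qed.

Definition rectS : set (set (S * S)) :=
  [set A `*` B | A in measurable & B in measurable].

Lemma pairs_gen (k : nat) : forall (I : {fset nat}) (C : nat -> set (S * S))
  (A B : nat -> set S),
  (forall i, i \in I -> measurable (C i)) ->
  (forall i, i \in I -> measurable (A i) /\ measurable (B i)) ->
  (forall i, i \in I -> (k <= i)%N -> C i = A i `*` B i) ->
  P (\bigcap_(i in [set` I]) (pr i @^-1` C i)) = \prod_(i <- I) (nu \x nu) (C i).
Proof.
elim: k => [|k IH] I C A B mC mAB hC.
- have -> : \bigcap_(i in [set` I]) (pr i @^-1` C i) =
            \bigcap_(i in [set` I]) (pr i @^-1` (A i `*` B i)).
    by apply: eq_bigcapr => i iI; rewrite hC.
  rewrite rect_case //; apply: eq_big_seq => i iI.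
  by rewrite hC // product_measure1E //; case: (mAB i iI).
have [kI|kI] := boolP (k \in I); last first.
  apply: (IH I C A B) => // i iI; rewrite leq_eqVlt => /orP [/eqP ik|].
    by move: kI; rewrite ik iI.
  exact: hC i iI.
set E := \bigcap_(i in [set` (I `\ k)%fset]) (pr i @^-1` C i).
set c := \prod_(i <- (I `\ k)%fset) (nu \x nu) (C i).
have mCk i : i \in I -> measurable (pr i @^-1` C i).
  by move=> iI; rewrite -[X in measurable X]setTI; apply: mpr => //; apply: mC.
have mE : measurable E.
  apply: fin_bigcap_measurable; first exact: finite_fset.
  move=> i Hi; have : i \in (I `\ k)%fset := Hi.
  by rewrite in_fsetD1 => /andP [_ iI]; apply: mCk.
have c0 : (0 <= c)%E by apply: prode_ge0 => i _; apply: measure_ge0.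
have cfin : c \is a fin_num.
  rewrite /c big_seq; apply: prode_fin_num => i.
  rewrite in_fsetD1 => /andP [_ iI]; rewrite ge0_fin_numE ?measure_ge0 //; exact: (le_lt_trans (probability_le1 (nu \x nu) (mC i iI)) (ltry _)).
pose r := NngNum (fine_ge0 c0).
have rc : ((r%:num)%:E = c)%E by apply: fineK.
have key : forall D, measurable D -> P (pr k @^-1` D `&` E) = ((nu \x nu) D * c)%E.
  move=> D mD.
  pose m1 := measure_function_pushforward__canonical__measure_function_Measure (mrestr P mE) (mpr k).
  pose m2 := mscale r (nu \x nu).
  suff h : m1 D = m2 D.
    by transitivity (m1 D) => //; rewrite h /m2 /mscale rc muleC.
  apply: (@measure_unique _ R (S * S)%type rectS (fun=> setT)); last exact: mD.
  - exact: measurable_prod_measurableType.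
  - move=> _ _ [A1 mA1 [B1 mB1 <-]] [A2 mA2 [B2 mB2 <-]].
    exists (A1 `&` A2); first exact: measurableI.
    by exists (B1 `&` B2); [exact: measurableI | rewrite setXI].
  - by move=> _; exists setT => //; exists setT => //; rewrite setXTT.
  - by apply/seteqP; split => // x _; exists 0%N.
  - move=> _ [A0 mA0 [B0 mB0 <-]].
    have := IH I (fun i => if i == k then A0 `*` B0 else C i)
      (fun i => if i == k then A0 else A i) (fun i => if i == k then B0 else B i).
    move=> /(_ _ _ _) h.
    transitivity (P (pr k @^-1` (A0 `*` B0) `&` E)) => //.
    rewrite /= /mscale rc muleC.
    have e1 := @split_cap I k (fun i => pr i @^-1` (if i == k then A0 `*` B0 else C i)) kI.
    have e2 : \prod_(i <- I) (nu \x nu) (if i == k then A0 `*` B0 else C i) =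
      ((nu \x nu) (if k == k then A0 `*` B0 else C k) *
       \prod_(i <- (I `\ k)%fset) (nu \x nu) (if i == k then A0 `*` B0 else C i))%E.
      exact: big_fsetD1.
    rewrite eqxx in e1 e2.
    have e3 : \bigcap_(i in [set` (I `\ k)%fset]) pr i @^-1` (if i == k then A0 `*` B0 else C i) = E.
      apply: eq_bigcapr => i Hi; have : i \in (I `\ k)%fset := Hi.
      by rewrite in_fsetD1 => /andP [/negbTE -> _].
    have e4 : \prod_(i <- (I `\ k)%fset) (nu \x nu) (if i == k then A0 `*` B0 else C i) = c.
      apply: eq_big_seq => i.
      by rewrite in_fsetD1 => /andP [/negbTE -> _].
    rewrite e3 in e1; rewrite e4 in e2; rewrite -e1 -e2; apply: h.
    + move=> i iI; case: eqP => _; [exact: measurableX | exact: mC].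
    + move=> i iI; case: eqP => _; [by [] | exact: mAB].
    + move=> i iI; case: eqP => [_ _|ne]; first by [].
      by rewrite leq_eqVlt => /orP [/eqP ik|]; [case: ne | exact: hC].
  - move=> _; apply: (le_lt_trans (probability_le1 P _) (ltry _)).
    by apply: measurableI => //; rewrite -[X in measurable X]setTI; apply: mpr.
rewrite (@split_cap I k _ kI) (big_fsetD1 k kI) key //; exact: mC.
Qed.


Lemma pairs_indep (I : {fset nat}) (C : nat -> set (S * S)) :
  (forall i, i \in I -> measurable (C i)) ->
  P (\bigcap_(i in [set` I]) (pr i @^-1` C i)) = \prod_(i <- I) (nu \x nu) (C i).
Proof.
move=> mC.
apply: (@pairs_gen (\max_(i <- I) i).+1 I C (fun=> setT) (fun=> setT)) => //.
move=> i iI; have := @leq_bigmax_seq _ (enum_fset I) xpredT (fun j : nat => j) i iI isT.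
by rewrite ltnNge => ->.
Qed.

Lemma pair_law i (A : set S) : measurable A ->
  P ((fun w => PhiA (pr i w)) @^-1` A) = FA nu A.
Proof.
move=> mA.
have mPA : measurable (PhiA @^-1` A).
  by rewrite -[X in measurable X]setTI; apply: measurable_PhiA.
have := @pairs_indep [fset i]%fset (fun=> PhiA @^-1` A).
rewrite big_seq_fset1.
have -> : [set` [fset i]%fset] = [set i].
  apply/seteqP; split => j Hj.
    by have : j \in [fset i]%fset := Hj; rewrite in_fset1 => /eqP.
  by change (j \in [fset i]%fset); rewrite in_fset1 Hj.
rewrite bigcap_set1 => -> //.
Qed.

End Key.

Section Steps.
Local Open Scope classical_set_scope.
Local Open Scope ereal_scope.
Context d (Omega : measurableType d) (R : realType) (P : probability Omega R).

Lemma step_and (Y : nat -> Omega -> S) (nu : probability S R) :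
  iid_with_law P Y nu ->
  iid_with_law P (fun i w => PhiA (Y (2 * i)%N w, Y (2 * i + 1)%N w)) (FA nu).
Proof.
move=> hY; have [hm hi hd] := hY.
have law := @pair_law _ _ _ P Y nu hY.
split.
- move=> i; apply: measurableT_comp; first exact: measurable_PhiA.
  exact: (@mpr _ _ _ P Y nu hY i).
- move=> I A mA.
  rewrite (@pairs_indep _ _ _ P Y nu hY I (fun i => PhiA @^-1` A i)); last first.
    by move=> i iI; rewrite -[X in measurable X]setTI; apply: measurable_PhiA => //; apply: mA.
  apply: eq_big_seq => i iI.
  by rewrite (law i (A i) (mA i iI)).
- by move=> i A mA; apply: law.
Qed.

Lemma step_or (Y : nat -> Omega -> S) (nu : probability S R) :
  iid_with_law P Y nu ->
  iid_with_law P (fun i w => Phib (Y i w)) (Fb nu).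
Proof.
move=> [hm hi hd]; split.
- by move=> i; apply: measurableT_comp; [exact: measurable_Phib | exact: hm].
- move=> I A mA; apply: (hi I (fun i => Phib @^-1` A i)).
  by move=> i iI; rewrite -[X in measurable X]setTI; apply: measurable_Phib => //; apply: mA.
- move=> i A mA; apply: (hd i (Phib @^-1` A)).
  by rewrite -[X in measurable X]setTI; apply: measurable_Phib.
Qed.

End Steps.

Lemma odd2n n : odd (2 * n)%N = false.
Proof. by rewrite mul2n odd_double. Qed.

Lemma CA_step X n : CA X (2 * n.+1)%N = and_rule (or_rule (CA X (2 * n)%N)).
Proof. by rewrite mulnS /= odd2n. Qed.

Lemma CAhat_step X n : CAhat X (2 * n.+1)%N = or_rule (and_rule (CAhat X (2 * n)%N)).
Proof. by rewrite mulnS /= odd2n. Qed.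

Theorem lemma16 (R : realType) (d : measure_display) (Omega : measurableType d)
    (P : probability Omega R) (X0 : Omega -> Grid) (mu : probability S R) :
  iid_with_law P (fun i w => X0 w i) mu ->
  forall n : nat,
    iid_with_law P (fun i w => CA (X0 w) (2 * n)%N i) (iter n (@F R) mu) /\
    iid_with_law P (fun i w => CAhat (X0 w) (2 * n)%N i) (iter n (@Fhat R) mu).
Proof.
move=> h0; elim=> [|n [IH1 IH2]]; first by split.
have e1 : (fun i w => CA (X0 w) (2 * n.+1)%N i) =
  (fun i w => PhiA ((fun i w => Phib (CA (X0 w) (2 * n)%N i)) (2 * i)%N w,
                    (fun i w => Phib (CA (X0 w) (2 * n)%N i)) (2 * i + 1)%N w)).
  by apply/funext => i; apply/funext => w; rewrite CA_step.
have e2 : (fun i w => CAhat (X0 w) (2 * n.+1)%N i) =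
  (fun i w => Phib ((fun i w => PhiA (CAhat (X0 w) (2 * n)%N (2 * i)%N,
                    CAhat (X0 w) (2 * n)%N (2 * i + 1)%N)) i w)).
  by apply/funext => i; apply/funext => w; rewrite CAhat_step.
rewrite e1 e2; split.
- exact: (@step_and _ _ _ P _ _ (@step_or _ _ _ P _ _ IH1)).
- exact: (@step_or _ _ _ P _ _ (@step_and _ _ _ P _ _ IH2)).
Qed.
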